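(* Let $(U_n)_{n\ge1}$ and $(V_n)_{n\ge1}$ be sequences in $\mathcal{D}$ converging in $\tau_{\mathcal{D}}$ to $U\in\mathcal{D}$ and $V\in\mathcal{D}$ respectively, and suppose $U_n\ge_sV_n$ for all $n$. Then $U\ge_sV$.
   Context: $\mathcal{D}$ is the set of non-increasing càdlàg functions $U:\mathbb{R}\to[0,1]$ with $\lim_{x\to-\infty}U(x)=1$ and $\lim_{x\to\infty}U(x)=0$. The topology $\tau_{\mathcal{D}}$: $U_n\to U$ iff $U_n(x)\to U(x)$ at every continuity point $x$ of $U$ (this is the image of the weak topology on probability measures under $\mu\mapsto(x\mapsto\mu((x,\infty)))$). For $U,V\in\mathcal{D}$, $U\ge_sV$ (''$U$ is more stretched than $V$'') means: for every $c\in\mathbb{R}$ and $x_1\le x_2$, $U(x_1)>V(x_1+c)$ implies $U(x_2)\ge V(x_2+c)$. *)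

(* Defs.v *)
From Stdlib Require Import Reals.
Open Scope R_scope.

Definition right_continuous_at (f : R -> R) (x : R) : Prop :=
  forall eps, 0 < eps -> exists delta, 0 < delta /\
    forall y, x <= y < x + delta -> Rabs (f y - f x) < eps.

Definition has_left_limit (f : R -> R) (x : R) : Prop :=
  exists l, forall eps, 0 < eps -> exists delta, 0 < delta /\
    forall y, x - delta < y < x -> Rabs (f y - l) < eps.

Definition cadlag (f : R -> R) : Prop :=
  forall x, right_continuous_at f x /\ has_left_limit f x.

Definition in_D (U : R -> R) : Prop :=
  (forall x, 0 <= U x <= 1) /\
  (forall x y, x <= y -> U y <= U x) /\
  cadlag U /\
  (forall eps, 0 < eps -> exists M, forall x, x <= M -> Rabs (U x - 1) < eps) /\
  (forall eps, 0 < eps -> exists M, forall x, M <= x -> Rabs (U x) < eps).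

Definition tauD_converges (Un : nat -> R -> R) (U : R -> R) : Prop :=
  forall x, continuity_pt U x -> Un_cv (fun n => Un n x) (U x).

Definition more_stretched (U V : R -> R) : Prop :=
  forall c x1 x2, x1 <= x2 -> V (x1 + c) < U x1 -> V (x2 + c) <= U x2.

(* Main.v *)
Require Import Defs.
From Stdlib Require Import Reals Lra Lia ZArith Classical ClassicalEpsilon.
Open Scope R_scope.

Lemma cont_of_eps f x : (forall eps, 0<eps -> exists d, 0<d /\ forall z, Rabs(z-x)<d -> Rabs(f z - f x) < eps) -> continuity_pt f x.
Proof. intros H eps Heps. destruct (H eps Heps) as [d [Hd Hz]]. exists d. split; [lra|].
intros z [_ Hz']. apply Hz. exact Hz'. Qed.

Lemma split_small (g : R->R) (mono: forall x y, x<=y -> g y <= g x) a b eps :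
  a < b -> 0 < eps -> exists a' b', a < a' < b' /\ b' < b /\ g a' - g b' < eps.
Proof.
  intros Hab He.
  set (a2 := a + (b-a)/3). set (b2 := b - (b-a)/3).
  assert (Ha2 : a < a2 < b2 /\ b2 < b) by (unfold a2, b2; lra).
  set (D := g a2 - g b2).
  assert (HD : 0 <= D) by (unfold D; assert (g b2 <= g a2) by (apply mono; lra); lra).
  destruct (archimed (D/eps)) as [Har _].
  destruct (Z.le_gt_cases (up (D/eps)) 0) as [Hz|Hz].
  { exfalso. apply IZR_le in Hz. assert (0 <= D/eps) by (unfold Rdiv; apply Rmult_le_pos; [lra| left; apply Rinv_0_lt_compat; lra]). lra. }
  set (N := Z.to_nat (up (D/eps))).
  assert (HN : INR N = IZR (up (D/eps))) by (unfold N; rewrite INR_IZR_INZ, Z2Nat.id; [reflexivity|lia]).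
  assert (HNe : D < INR N * eps).
  { rewrite HN. apply Rmult_lt_compat_r with (r := eps) in Har; [|lra].
    unfold Rdiv in Har. rewrite Rmult_assoc, Rinv_l, Rmult_1_r in Har; lra. }
  assert (HN0 : 0 < INR N) by (rewrite HN; apply IZR_lt; lia).
  set (h := (b2 - a2) / INR N).
  assert (Hh : 0 < h) by (unfold h; apply Rdiv_lt_0_compat; lra).
  set (t := fun i => a2 + INR i * h).
  destruct (classic (exists i, (i < N)%nat /\ g (t i) - g (t (S i)) < eps)) as [[i [Hi Hg]]|Hno].
  - exists (t i), (t (S i)).
    assert (INR i < INR (S i)) by (apply lt_INR; lia).
    assert (INR (S i) <= INR N) by (apply le_INR; lia).
    assert (0 <= INR i) by apply pos_INR.
    assert (INR (S i) * h <= INR N * h) by (apply Rmult_le_compat_r; lra).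
    assert (INR i * h < INR (S i) * h) by (apply Rmult_lt_compat_r; lra).
    assert (0 <= INR i * h) by (apply Rmult_le_pos; lra).
    assert (INR N * h = b2 - a2) by (unfold h; field; lra).
    unfold t. repeat split; try lra.
    exact Hg.
  - exfalso.
    assert (Hind : forall i, (i <= N)%nat -> g (t 0%nat) - g (t i) >= INR i * eps).
    { induction i as [|i IH]; intros Hi.
      - simpl. lra.
      - assert (~ (g (t i) - g (t (S i)) < eps)) by (intro; apply Hno; exists i; split; [lia|assumption]).
        specialize (IH ltac:(lia)). rewrite S_INR. lra. }
    specialize (Hind N (le_n N)).
    unfold t in Hind. simpl in Hind.
    replace (a2 + 0 * h) with a2 in Hind by ring.
    replace (a2 + INR N * h) with b2 in Hind by (unfold h; field; lra).
    fold D in Hind. lra.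
Qed.

Lemma small_inv eps : 0 < eps -> exists k, / INR (S k) < eps.
Proof.
  intros He. destruct (archimed (/eps)) as [H _].
  assert (0 < /eps) by (apply Rinv_0_lt_compat; lra).
  assert (Hz : (0 < up (/eps))%Z) by (apply lt_IZR; lra).
  exists (Z.to_nat (up (/eps))).
  assert (HN : INR (Z.to_nat (up (/eps))) = IZR (up (/eps))) by (rewrite INR_IZR_INZ, Z2Nat.id; [reflexivity|lia]).
  rewrite S_INR, HN.
  assert (/eps < IZR (up (/eps)) + 1) by lra.
  assert (Hi : / (IZR (up (/eps)) + 1) < / / eps) by (apply Rinv_lt_contravar; [apply Rmult_lt_0_compat|]; lra).
  rewrite Rinv_inv in Hi. exact Hi.
Qed.

Lemma cont_point (f1 f2 : R->R) (m1: forall x y, x<=y -> f1 y <= f1 x)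
  (m2: forall x y, x<=y -> f2 y <= f2 x) a b : a < b ->
  exists y, a < y < b /\ (forall eps, 0<eps -> exists d, 0<d /\ forall z, Rabs (z-y) < d ->
     Rabs (f1 z - f1 y) < eps /\ Rabs (f2 z - f2 y) < eps).
Proof.
  intros Hab.
  set (g := fun x => f1 x + f2 x).
  assert (mg : forall x y, x <= y -> g y <= g x) by (intros x y Hxy; unfold g; specialize (m1 x y Hxy); specialize (m2 x y Hxy); lra).
  assert (HF : forall (k:nat) (p : R*R), exists q : R*R, fst p < snd p ->
     fst p < fst q < snd q /\ snd q < snd p /\ g (fst q) - g (snd q) < / INR (S k)).
  { intros k [p1 p2]. destruct (Rlt_dec p1 p2) as [Hp|Hp].
    - destruct (split_small g mg p1 p2 (/ INR (S k)) Hp) as [a' [b' H]].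
      + apply Rinv_0_lt_compat, lt_0_INR; lia.
      + exists (a', b'). intros _. exact H.
    - exists (p1,p2). simpl. intros; contradiction. }
  set (F := fun k p => proj1_sig (constructive_indefinite_description _ (HF k p))).
  assert (HFp : forall k p, fst p < snd p ->
     fst p < fst (F k p) < snd (F k p) /\ snd (F k p) < snd p /\ g (fst (F k p)) - g (snd (F k p)) < / INR (S k)).
  { intros k p. unfold F. destruct (constructive_indefinite_description _ (HF k p)). simpl. auto. }
  set (s := fix s (n:nat) : R*R := match n with O => (a,b) | S n => F n (s n) end).
  assert (Hs : forall n, fst (s n) < snd (s n)).
  { induction n as [|n IH]. simpl; lra. change (s (S n)) with (F n (s n)). destruct (HFp n (s n) IH) as [H1 _]. lra. }
  assert (Hstep : forall n, fst (s n) < fst (s (S n)) /\ snd (s (S n)) < snd (s n) /\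
                 g (fst (s (S n))) - g (snd (s (S n))) < / INR (S n)).
  { intros n. change (s (S n)) with (F n (s n)). destruct (HFp n (s n) (Hs n)) as [H1 [H2 H3]]. repeat split; lra. }
  assert (Hmon : forall n m, (n <= m)%nat -> fst (s n) <= fst (s m) /\ snd (s m) <= snd (s n)).
  { intros n m Hnm. induction Hnm. lra. destruct (Hstep m) as [H1 [H2 _]]. lra. }
  assert (Hab' : forall n m, fst (s n) < snd (s m)).
  { intros n m. destruct (Hmon n (Nat.max n m) ltac:(lia)) as [H1 _].
    destruct (Hmon m (Nat.max n m) ltac:(lia)) as [_ H2]. specialize (Hs (Nat.max n m)). lra. }
  set (E := fun x => exists n, x = fst (s n)).
  assert (HE1 : bound E) by (exists b; intros x [n ->]; specialize (Hab' n 0%nat); simpl in Hab'; lra).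
  assert (HE2 : exists x, E x) by (exists a; exists 0%nat; reflexivity).
  destruct (completeness E HE1 HE2) as [y [Hub Hlub]].
  assert (Hy1 : forall n, fst (s n) <= y) by (intros n; apply Hub; exists n; reflexivity).
  assert (Hy2 : forall n, y <= snd (s n)).
  { intros n. apply Hlub. intros x [m ->]. left. apply Hab'. }
  exists y. split.
  { destruct (Hstep 0%nat) as [H1 [H2 _]]. specialize (Hy1 1%nat). specialize (Hy2 1%nat). simpl in *. lra. }
  intros eps He. destruct (small_inv eps He) as [k Hk].
  destruct (Hstep k) as [H1 [H2 H3]].
  set (A := fst (s (S k))) in *. set (B := snd (s (S k))) in *.
  assert (HyA : A < y).
  { destruct (Hstep (S k)) as [H4 _]. specialize (Hy1 (S (S k))). fold A in H4. lra. }
  assert (HyB : y < B).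
  { destruct (Hstep (S k)) as [_ [H4 _]]. specialize (Hy2 (S (S k))). fold B in H4. lra. }
  exists (Rmin (y - A) (B - y)). split.
  { apply Rmin_glb_lt; lra. }
  intros z Hz. apply Rabs_def2 in Hz. destruct Hz as [Hz1 Hz2].
  assert (Hm1 := Rmin_l (y - A) (B - y)). assert (Hm2 := Rmin_r (y - A) (B - y)).
  assert (HzA : A <= z) by lra. assert (HzB : z <= B) by lra.
  assert (HyA' : A <= y) by lra. assert (HyB' : y <= B) by lra.
  pose proof (m1 _ _ HzA). pose proof (m1 _ _ HzB). pose proof (m1 _ _ HyA'). pose proof (m1 _ _ HyB').
  pose proof (m2 _ _ HzA). pose proof (m2 _ _ HzB). pose proof (m2 _ _ HyA'). pose proof (m2 _ _ HyB').
  unfold g in H3. split; apply Rabs_def1; lra.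
Qed.

Theorem lemma2p1 (Un Vn : nat -> R -> R) (U V : R -> R) :
  (forall n, (1 <= n)%nat -> in_D (Un n)) ->
  (forall n, (1 <= n)%nat -> in_D (Vn n)) ->
  in_D U -> in_D V ->
  tauD_converges Un U -> tauD_converges Vn V ->
  (forall n, (1 <= n)%nat -> more_stretched (Un n) (Vn n)) ->
  more_stretched U V.
Proof.
  intros _ _ [_ [mU [cU _]]] [_ [mV [cV _]]] HU HV Hms c x1 x2 Hx H1.
  apply Rnot_lt_le. intro H2.
  set (W := fun y => V (y + c)).
  assert (mW : forall x y, x <= y -> W y <= W x) by (intros x y Hxy; unfold W; apply mV; lra).
  destruct (proj1 (cU x1) (U x1 - V (x1 + c)) ltac:(lra)) as [d1 [Hd1 Hr1]].
  destruct (proj1 (cV (x2 + c)) (V (x2 + c) - U x2) ltac:(lra)) as [d2 [Hd2 Hr2]].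
  assert (Hdd1 := Rmin_l d1 d2). assert (Hdd2 := Rmin_r d1 d2).
  set (d := Rmin d1 d2) in *.
  assert (Hd : 0 < d) by (apply Rmin_glb_lt; lra).
  assert (getc : forall a b, a < b -> exists y, a < y < b /\ continuity_pt U y /\ continuity_pt V (y + c)).
  { intros a b Hab. destruct (cont_point U W mU mW a b Hab) as [y [Hy Hc]].
    exists y. split; [exact Hy|split].
    - apply cont_of_eps. intros eps He. destruct (Hc eps He) as [e [He' Hz]].
      exists e. split; [exact He'|]. intros z Hz'. apply (Hz z Hz').
    - apply cont_of_eps. intros eps He. destruct (Hc eps He) as [e [He' Hz]].
      exists e. split; [exact He'|]. intros z Hz'.
      assert (Rabs (z - c - y) < e) by (replace (z - c - y) with (z - (y + c)) by ring; exact Hz').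
      destruct (Hz (z - c) H) as [_ HW]. unfold W in HW. replace (z - c + c) with z in HW by ring. exact HW. }
  destruct (getc x1 (x1 + d) ltac:(lra)) as [y1 [Hy1 [cU1 cV1]]].
  destruct (getc (Rmax y1 x2) (x2 + d)) as [y2 [Hy2 [cU2 cV2]]].
  { apply Rmax_lub_lt; lra. }
  assert (Hm1 := Rmax_l y1 x2). assert (Hm2 := Rmax_r y1 x2).
  assert (G1 : V (y1 + c) < U y1).
  { assert (Rabs (U y1 - U x1) < U x1 - V (x1 + c)) by (apply Hr1; lra).
    apply Rabs_def2 in H. assert (V (y1 + c) <= V (x1 + c)) by (apply mV; lra). lra. }
  assert (G2 : U y2 < V (y2 + c)).
  { assert (Rabs (V (y2 + c) - V (x2 + c)) < V (x2 + c) - U x2) by (apply Hr2; lra).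
    apply Rabs_def2 in H. assert (U y2 <= U x2) by (apply mU; lra). lra. }
  set (e1 := (U y1 - V (y1 + c)) / 2). set (e2 := (V (y2 + c) - U y2) / 2).
  destruct (HU y1 cU1 e1 ltac:(unfold e1; lra)) as [N1 HN1].
  destruct (HV (y1 + c) cV1 e1 ltac:(unfold e1; lra)) as [N2 HN2].
  destruct (HU y2 cU2 e2 ltac:(unfold e2; lra)) as [N3 HN3].
  destruct (HV (y2 + c) cV2 e2 ltac:(unfold e2; lra)) as [N4 HN4].
  set (N := S (N1 + N2 + N3 + N4)).
  specialize (HN1 N ltac:(unfold N; lia)). specialize (HN2 N ltac:(unfold N; lia)).
  specialize (HN3 N ltac:(unfold N; lia)). specialize (HN4 N ltac:(unfold N; lia)).
  unfold R_dist in *. apply Rabs_def2 in HN1, HN2, HN3, HN4.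
  assert (K := Hms N ltac:(unfold N; lia) c y1 y2 ltac:(lra) ltac:(unfold e1 in *; lra)).
  unfold e2 in *. lra.
Qed.
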